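(* Let $S$ be a topological Clifford semigroup which is $C^1$ at the idempotents. Then the semilattice of idempotents $E(S)$ is discrete in the subspace topology inherited from $S$. Consequently every maximal subgroup $G_e$ ($e\in E(S)$) is open in $S$, and $S$ is a strong semilattice of topological groups.
   Context: An inverse semigroup is a semigroup $S$ in which every $x$ has a unique $x^{-1}$ with $xx^{-1}x=x$ and $x^{-1}xx^{-1}=x^{-1}$. A Clifford semigroup is an inverse semigroup with $xx^{-1}=x^{-1}x$ for all $x$ (equivalently, all idempotents are central). $E(S)=\{e\in S: e^2=e\}$ is a commutative semigroup of idempotents (a semilattice), ordered by $e\le f\iff ef=e$. For $e\in E(S)$, $G_e:=\{x\in S: xx^{-1}=e\}$ is a group with identity $e$ (the maximal subgroup at $e$), and $S=\bigsqcup_{e\in E(S)}G_e$. For $e\le f$ the bonding map is $\varphi_{f,e}\colon G_f\to G_e$, $x\mapsto ex$. A topological Clifford semigroup is a Clifford semigroup with a topology making multiplication $S\times S\to S$ and inversion $x\mapsto x^{-1}$ continuous; each $G_e$ carries the subspace topology. $S$ is a strong semilattice of topological groups if the bonding maps are continuous and the topology of $S$ is the disjoint-union (topological sum) topology of the subspaces $G_e$, $e\in E(S)$. $S$ is $C^1$ at the idempotents if for every $e\in E(S)$ there exist a Banach space $X_e$, open sets $e\in U_e\subseteq W_e\subseteq S$, and a homeomorphism $\varphi_e\colon W_e\to V_e$ onto an open subset $V_e\subseteq X_e$ with $\varphi_e(e)=0$, such that $U_eU_e\subseteq W_e$ and the map $\varphi_e(U_e)\times\varphi_e(U_e)\to X_e$,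 $(u,v)\mapsto \varphi_e(\varphi_e^{-1}(u)\varphi_e^{-1}(v))$, is of class $C^1$ in the Fréchet sense. *)

(* Defs.v *)
From HB Require Import structures.
From mathcomp Require Import all_boot all_order all_algebra.
From mathcomp Require Import all_classical all_reals all_analysis.
Set Implicit Arguments. Unset Strict Implicit. Unset Printing Implicit Defensive.
Import Order.TTheory GRing.Theory Num.Theory numFieldNormedType.Exports.
Local Open Scope classical_set_scope.
Local Open Scope ring_scope.

Definition top_clifford_semigroup (S : topologicalType)
    (mul : S -> S -> S) (inv : S -> S) : Prop :=
  (forall x y z, mul x (mul y z) = mul (mul x y) z) /\
  (* inverse semigroup: inv x is an inverse of x, and the unique one *)
  (forall x, mul (mul x (inv x)) x = x) /\
  (forall x, mul (mul (inv x) x) (inv x) = inv x) /\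
  (forall x y, mul (mul x y) x = x -> mul (mul y x) y = y -> y = inv x) /\
  (forall x, mul x (inv x) = mul (inv x) x) /\
  continuous (fun p : S * S => mul p.1 p.2) /\
  continuous inv.

Definition idempotents (S : Type) (mul : S -> S -> S) : set S :=
  [set e | mul e e = e].

Definition max_subgroup (S : Type) (mul : S -> S -> S) (inv : S -> S) (e : S)
  : set S := [set x | mul x (inv x) = e].

Definition idem_le (S : Type) (mul : S -> S -> S) (e f : S) : Prop :=
  mul e f = e.

Definition homeo_onto (T U : topologicalType) (W : set T) (V : set U)
    (phi : T -> U) (psi : U -> T) : Prop :=
    (forall x, W x -> V (phi x)) /\ (forall v, V v -> W (psi v)) /\
    (forall x, W x -> psi (phi x) = x) /\ (forall v, V v -> phi (psi v) = v) /\
    {within W, continuous phi} /\ {within V, continuous psi}.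

(* Frechet C^1 on an open set D: differentiable at each point of D, and the
   derivative p |-> 'd F p is continuous in the operator norm on D. *)
Definition C1_on (R : realType) (X Y : normedModType R) (D : set X)
    (F : X -> Y) : Prop :=
  (forall p, D p -> differentiable F p) /\
  (forall p, D p -> forall eps : R, 0 < eps ->
     \forall q \near p, forall h : X, `|'d F q h - 'd F p h| <= eps * `|h|).

Definition C1_at_idempotents (R : realType) (S : topologicalType)
    (mul : S -> S -> S) : Prop :=
  forall e, idempotents mul e ->
  exists (X : completeNormedModType R) (U W : set S) (V : set X)
         (phi : S -> X) (psi : X -> S),
    open U /\ open W /\ U e /\ U `<=` W /\ open V /\
    homeo_onto W V phi psi /\ phi e = 0 /\
    (forall u v, U u -> U v -> W (mul u v)) /\
    C1_on [set p : X * X | (phi @` U) p.1 /\ (phi @` U) p.2]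
      (fun p : X * X => phi (mul (psi p.1) (psi p.2))).

(* Main.v *)
Require Import Defs.
From HB Require Import structures.
From mathcomp Require Import all_boot all_order all_algebra.
From mathcomp Require Import all_classical all_reals all_analysis.
From mathcomp Require Import lra.
Import numFieldNormedType.Exports.
Local Open Scope classical_set_scope.

Section Alg.
Variables (T : Type) (m : T -> T -> T) (i : T -> T).
Hypothesis As : forall x y z, m x (m y z) = m (m x y) z.
Hypothesis A2 : forall x, m (m x (i x)) x = x.
Hypothesis A3 : forall x, m (m (i x) x) (i x) = i x.
Hypothesis A4 : forall x y, m (m x y) x = x -> m (m y x) y = y -> y = i x.

Let A x y z : m (m x y) z = m x (m y z). Proof. by rewrite As. Qed.

Lemma idem_inv e : m e e = e -> i e = e.
Proof. by move=> ee; symmetry; apply: A4; rewrite ee ee. Qed.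

Lemma inv_inv x : x = i (i x).
Proof. by apply: A4; [apply: A3 | apply: A2]. Qed.

Lemma idem_mulE e t : m e e = e -> m e (m e t) = m e t.
Proof. by move=> ee; rewrite As ee. Qed.

Lemma idem_prod e f : m e e = e -> m f f = f -> m (m e f) (m e f) = m e f.
Proof.
move=> ee ff.
set x := i (m e f).
have axa : m (m (m e f) x) (m e f) = m e f by apply: A2.
have xax : m (m x (m e f)) x = x by apply: A3.
have xax' t : m x (m e (m f (m x t))) = m x t.
  by rewrite -[in RHS]xax !A.
have axa' t : m e (m f (m x (m e (m f t)))) = m e (m f t).
  by rewrite -[in RHS](A e f t) -[in RHS]axa !A.
have axa0 : m e (m f (m x (m e f))) = m e f by rewrite -[in RHS]axa !A.
have xax0 : m x (m e (m f x)) = x by rewrite -[in RHS]xax !A.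
have w_inv : m (m f x) e = x.
  apply: A4.
    by rewrite !A (idem_mulE f) // (idem_mulE e) // axa0.
  rewrite !A (idem_mulE e) // (idem_mulE f) //.
  by rewrite xax'.
have xx : m x x = x.
  rewrite -{1 2}w_inv !A.
  by rewrite xax' -A w_inv.
have ax : m e f = x by rewrite (inv_inv (m e f)) -/x (idem_inv _ xx).
by rewrite ax xx.
Qed.

Lemma idem_comm e f : m e e = e -> m f f = f -> m e f = m f e.
Proof.
move=> ee ff; have ef := idem_prod _ _ ee ff; have fe := idem_prod _ _ ff ee.
symmetry; rewrite -[in RHS](idem_inv _ ef); apply: A4.
  by rewrite !A (idem_mulE f) // (idem_mulE e) // -A ef.
by rewrite !A (idem_mulE e) // (idem_mulE f) // -A fe.
Qed.

Lemma xinv_idem x : m (m x (i x)) (m x (i x)) = m x (i x).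
Proof. by rewrite -A A2. Qed.
End Alg.

Section Key.
Import Order.TTheory GRing.Theory Num.Theory.
Local Open Scope ring_scope.
Lemma i1 (V : zmodType) (z a b : V) : z = (z - a) + (z - b) - (z - (a + b)).
Proof. by rewrite opprB (addrACA z (- a) z (- b)) -opprD -(addrA (z + z)) addKr addrK. Qed.
Lemma i2 (V : zmodType) (z a b : V) : z = (z - (a + b)) - (0 - a) - (0 - b).
Proof. by rewrite !sub0r !opprK -addrA subrK. Qed.

Lemma key (R : realType) (X : normedModType R) (F : X * X -> X) :
  differentiable F 0 -> F 0 = 0 ->
  exists2 d : R, 0 < d & forall z : X, `|z| < d -> F (z, z) = z ->
   ((F (z, 0) = z /\ F (0, z) = z) \/ (F (z, 0) = 0 /\ F (0, z) = 0)) -> z = 0.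
Proof.
move=> dF F0.
have := diff_locally dF => /eqaddoP /(_ (1/4)).
have q : (0:R) < 1/4 by lra.
move=> /(_ q) /nbhs_norm0P [d d0 Hd]; exists d => // z zd Fzz Hc.
set D := 'd F 0.
have r : forall h : X * X, `|h| < d -> `|F h - D h| <= 1/4 * `|h|.
  move=> h /Hd /=; suff -> : (F \o +%R^~ 0 - (cst (F 0) + 'd F 0)) h = F h - D h by [].
  rewrite !fctE /= addr0 F0; exact: (congr1 (fun w => F h - w) (add0r _)).
have n1 : `|(z, 0) : X * X| = `|z| by rewrite prod_normE /= normr0 max_l.
have n2 : `|(0, z) : X * X| = `|z| by rewrite prod_normE /= normr0 max_r.
have n3 : `|(z, z) : X * X| = `|z| by rewrite prod_normE /= maxxx.
have r1 := r (z, 0) ltac:(by rewrite n1).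
have r2 := r (0, z) ltac:(by rewrite n2).
have r3 := r (z, z) ltac:(by rewrite n3).
rewrite n1 in r1; rewrite n2 in r2; rewrite n3 in r3.
have lin : D (z, z) = D (z, 0) + D (0, z).
  by rewrite -linearD; congr (D _); apply: injective_projections => /=; rewrite ?addr0 ?add0r.
rewrite Fzz lin in r3.
have : `|z| <= 3/4 * `|z|.
  case: Hc => [[E1 E2]|[E1 E2]]; rewrite E1 in r1; rewrite E2 in r2.
  - rewrite {1}(i1 _ z (D (z, 0)) (D (0, z))).
    apply: le_trans (ler_normB _ _) _.
    have := ler_normD (z - D (z, 0)) (z - D (0, z)); lra.
  - rewrite {1}(i2 _ z (D (z, 0)) (D (0, z))).
    apply: le_trans (ler_normB _ _) _.
    have := ler_normB (z - (D (z, 0) + D (0, z))) (0 - D (z, 0)); lra.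
move=> h; apply/normr0_eq0; have := normr_ge0 z; lra.
Qed.
End Key.

Theorem theorem6p5 (R : realType) (S : topologicalType)
    (mul : S -> S -> S) (inv : S -> S) :
  top_clifford_semigroup mul inv ->
  C1_at_idempotents R mul ->
  (* E(S) is discrete in the subspace topology *)
  (forall e, idempotents mul e ->
     exists O : set S, open O /\ O `&` idempotents mul = [set e]) /\
  (* every maximal subgroup G_e is open in S *)
  (forall e, idempotents mul e -> open (max_subgroup mul inv e)) /\
  (* S is a strong semilattice of topological groups *)
  ((forall e f, idempotents mul e -> idempotents mul f -> idem_le mul e f ->
      {within max_subgroup mul inv f, continuous (fun x => mul e x)}) /\
   (forall A : set S,
      open A <->
      (forall e, idempotents mul e ->
         exists O : set S, open O /\
           A `&` max_subgroup mul inv e = O `&` max_subgroup mul inv e))).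
Proof.
move=> [As [A2 [A3 [A4 [A5 [Cm Ci]]]]]] HC1.
have cml : forall a, continuous (mul a).
  move=> a x.
  exact: (@continuous2_cvg _ _ _ _ (nbhs x) _ (fun _ => a) id mul a x (Cm (a, x)) (cvg_cst a) cvg_id).
have cq : continuous (fun x => mul x (inv x)).
  move=> x.
  exact: (@continuous2_cvg _ _ _ _ (nbhs x) _ id inv mul x (inv x) (Cm (x, inv x)) cvg_id (Ci x)).
have disc : forall e, idempotents mul e ->
     exists O : set S, open O /\ O `&` idempotents mul = [set e].
  move=> e He.
  have := HC1 e He; move=> [ X [ U [ W [ V [ phi [ psi [ oU [ oW [ Ue [ UW [ oV [ [ H1 [ H2 [ H3 [ H4 [ Hphi Hpsi ] ] ] ] ] [ phie0 [ UUW HC ] ] ] ] ] ] ] ] ] ] ] ] ] ].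
  set F := fun p : X * X => phi (mul (psi p.1) (psi p.2)).
  have Fval : forall a b, W a -> W b -> F (phi a, phi b) = phi (mul a b).
    by move=> a b Wa Wb; rewrite /F /= H3 // H3.
  have We : W e by apply: UW.
  have dF : differentiable F (0%R : X * X).
    apply: HC.1; split => /=; exists e => //.
  have F0 : F 0%R = 0%R.
    have -> : (0%R : X * X) = (phi e, phi e) by rewrite phie0.
    by rewrite Fval // He phie0.
  have [ d d0 Hk] := @key R X F dF F0.
  have cphi : {in W, continuous phi}.
    by rewrite -continuous_open_subspace.
  set B := W `&` phi @^-1` ball (0%R : X) d.
  have oB : open B := proj1 (continuous_inP phi oW) cphi _ (ball_open 0%R d).
  have Bn : forall x, B x -> (`|phi x| < d)%R.
    by move=> x [_]; rewrite -ball_normE /= GRing.sub0r Num.Theory.normrN.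
  set U' := U `&` B.
  have oU' : open U' by apply: openI.
  have U'e : U' e.
    split => //; split => //; rewrite /= phie0; exact: ballxx.
  exists (U' `&` mul e @^-1` U'); split.
    apply: openI => //; move: (cml e) => /continuousP; apply => //.
  apply/seteqP; split; last first.
    by move=> _ ->; split => //; split => //=; rewrite He.
  move=> f [ [ [ Uf Bf] [ Ug Bg] ] ff].
  have Wf : W f by apply: UW.
  have Wg : W (mul e f) by apply: UW.
  have gg : mul (mul e f) (mul e f) = mul e f := idem_prod _ _ _ As A2 A3 A4 _ _ He ff.
  have fe : mul f e = mul e f := esym (idem_comm _ _ _ As A2 A3 A4 _ _ He ff).
  have eg : mul e (mul e f) = mul e f by rewrite As He.
  have ge : mul (mul e f) e = mul e f by rewrite -As fe As He.
  have ge0 : mul e f = e.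
    have y0 : phi (mul e f) = 0%R.
      apply: Hk; first exact: Bn.
        by rewrite Fval // gg.
      left; split.
        by rewrite -phie0 Fval // ge.
      by rewrite -phie0 Fval // eg.
    by rewrite -(H3 _ Wg) y0 -phie0 H3.
  have x0 : phi f = 0%R.
    apply: Hk; first exact: Bn.
      by rewrite Fval // ff.
    right; split.
      by rewrite -phie0 Fval // fe ge0.
    by rewrite -phie0 Fval // ge0.
  by rewrite -(H3 _ Wf) x0 -phie0 H3.
split => //.
have Gopen : forall e, idempotents mul e -> open (max_subgroup mul inv e).
  move=> e He; have [ O [oO OE]] := disc e He.
  suff -> : max_subgroup mul inv e = (fun x => mul x (inv x)) @^-1` O.
    by move: cq => /continuousP; apply.
  apply/seteqP; split => x /=.
    by rewrite /max_subgroup /= => ->; have : [set e] e by [];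
      rewrite -OE => -[].
  move=> Ox; have : (O `&` idempotents mul) (mul x (inv x)).
    split => //; exact: (xinv_idem _ _ _ As A2 x).
  by rewrite OE.
split => //; split.
  move=> e f _ _ _; exact: continuous_subspaceT.
move=> A; split.
  by move=> oA e _; exists A.
move=> H; rewrite openE => x Ax.
have ex : idempotents mul (mul x (inv x)) by exact: (xinv_idem _ _ _ As A2 x).
have [ O [oO AO]] := H _ ex.
have Gx : max_subgroup mul inv (mul x (inv x)) x by [].
have : (O `&` max_subgroup mul inv (mul x (inv x))) x.
  by rewrite -AO.
move=> OGx; rewrite /interior.
apply: (@filterS _ _ _ (O `&` max_subgroup mul inv (mul x (inv x)))).
  by rewrite -AO => y [].
apply: open_nbhs_nbhs; split => //; apply: openI => //; exact: Gopen.
Qed.
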